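(* Let $u,\phi_1,\dots,\phi_N$ solve the $n$-th KdV equation with self-consistent sources of degree $N$, let $\eta=-\frac12\alpha$, let $f_1,\dots,f_m$ satisfy the Lax pair $f_{j,xx}+(\lambda_{N+j}+u)f_j=0$, $f_{j,t}=Q^{(n,N)}f_j$ with spectral parameters $\lambda_{N+1},\dots,\lambda_{N+m}$ respectively, and let $\psi$ satisfy the Lax pair with spectral parameter $\lambda$. Define iterates by $f_j[0]=f_j$, $\psi[0]=\psi$ and, for $l\ge1$ and $g\in\{f_j,\psi\}$, $$g[l]=g[l-1]-\frac{f_l[l-1]}{1+\partial^{-1}(f_l[l-1]^2)}\,\partial^{-1}\big(f_l[l-1]\,g[l-1]\big).$$ Then for all integers $l,k$ with $1\le l\le m-1$ and $1\le k\le m-l$, $$W_1(f_{l+1}[l],\dots,f_{l+k}[l])=\frac{W_1(f_l[l-1],f_{l+1}[l-1],\dots,f_{l+k}[l-1])}{1+\partial^{-1}(f_l[l-1]^2)},$$ $$W_2(f_{l+1}[l],\dots,f_{l+k}[l],\psi[l])=\frac{W_2(f_l[l-1],f_{l+1}[l-1],\dots,f_{l+k}[l-1],\psi[l-1])}{1+\partial^{-1}(f_l[l-1]^2)}.$$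
   Context: Let $\partial=\partial/\partial x$ and $\partial^{-1}=\int_{-\infty}^x\cdot\,dx$; all functions of $(x,t)$ are smooth and decay as $x\to-\infty$ sufficiently fast that all integrals $\partial^{-1}(\cdot)$ appearing converge. For a potential $u(x,t)$ let $L=-\frac14\partial^2-u+\frac12\partial^{-1}u_x$, $b_0=0$, $b_1=1$, $b_{k+1}=Lb_k$ ($k\ge1$), $a_k=-\frac12 b_{k,x}$; write $b_k[u]$. Fix $n\ge0$, $t=t_n$, $A^{(n)}(u,\lambda)=\sum_{i=0}^{n+1}(a_i+b_i\partial)\lambda^{n+1-i}$. The $n$-th KdV equation with self-consistent sources of degree $N$ (constant $\alpha$, distinct constants $\lambda_j$) is $u_t=\partial\big[-2b_{n+2}[u]-2\alpha\sum_{j=1}^N\phi_j^2\big]$, $\phi_{j,xx}+(\lambda_j+u)\phi_j=0$. For a constant $\eta$ and spectral parameter $\lambda$, $Q^{(n,N)}\psi=A^{(n)}(u,\lambda)\psi+\eta\psi+\alpha\sum_{j=1}^N\phi_j\partial^{-1}(\phi_j\psi)$; the Lax pair with spectral parameter $\lambda$ is $\psi_{xx}+(\lambda+u)\psi=0$, $\psi_t=Q^{(n,N)}\psi$. The constants $\lambda_1,\dots,\lambda_{N+m}$ are distinct. For functions $g_1,\dots,g_k$: $W_1(g_1,\dots,g_k)=\det F$ with $F_{ij}=\delta_{ij}+\partial^{-1}(g_ig_j)$, $1\le i,j\le k$; and $W_2(g_1,\dots,g_k)=\det G$ with $G_{ij}=\delta_{ij}+\partial^{-1}(g_ig_j)$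 for $1\le i\le k-1$, $1\le j\le k$, and $G_{kj}=g_j$ for $1\le j\le k$. *)

(* Defs.v *)
From Stdlib Require Import Reals.
From Coquelicot Require Import Coquelicot.
From mathcomp Require Import all_boot all_algebra.
From mathcomp Require Import Rstruct.

Set Implicit Arguments.
Unset Strict Implicit.
Unset Printing Implicit Defensive.

Definition fun2 := R -> R -> R.

Local Open Scope R_scope.

Definition dx (F : fun2) : fun2 := fun x t => Derive (fun y => F y t) x.
Definition dt (F : fun2) : fun2 := fun x t => Derive (fun s => F x s) t.

Definition mul2 (F G : fun2) : fun2 := fun x t => F x t * G x t.

Definition pinv (F : fun2) : fun2 :=
  fun x t => RInt_gen (fun y => F y t) (Rbar_locally m_infty) (at_point x).

Definition ex_pinv (F : fun2) : Prop :=
  forall x t, ex_RInt_gen (fun y => F y t) (Rbar_locally m_infty) (at_point x).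

Fixpoint dword (w : list bool) (F : fun2) : fun2 :=
  match w with
  | nil => F
  | cons true w' => dx (dword w' F)
  | cons false w' => dt (dword w' F)
  end.

Definition smooth2 (F : fun2) : Prop :=
  forall (w : list bool) (x t : R),
    ex_derive (fun y => dword w F y t) x /\
    ex_derive (fun s => dword w F x s) t /\
    continuous (fun p : R * R => dword w F (fst p) (snd p)) (x, t).

Definition Lop (u b : fun2) : fun2 :=
  fun x t => - / 4 * dx (dx b) x t - u x t * b x t
             + / 2 * pinv (mul2 (dx u) b) x t.

Fixpoint bkdv (u : fun2) (k : nat) : fun2 :=
  match k with
  | O => fun _ _ => 0
  | S O => fun _ _ => 1
  | S k' => Lop u (bkdv u k')
  end.

Definition aseq (u : fun2) (k : nat) : fun2 := fun x t => - / 2 * dx (bkdv u k) x t.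

Fixpoint sumR (lo cnt : nat) (F : nat -> R) : R :=
  match cnt with
  | O => 0
  | S c => F lo + sumR (S lo) c F
  end.

Definition Aop (n : nat) (u : fun2) (lam : R) (psi : fun2) : fun2 :=
  fun x t => sumR 0 (n + 2)
    (fun i => (aseq u i x t * psi x t + bkdv u i x t * dx psi x t)
              * lam ^ (n + 1 - i)).

Definition Qop (n N : nat) (u : fun2) (phi : nat -> fun2) (alpha eta lam : R)
  (psi : fun2) : fun2 :=
  fun x t => Aop n u lam psi x t + eta * psi x t
             + alpha * sumR 1 N (fun j => phi j x t * pinv (mul2 (phi j) psi) x t).

Definition dstep (h g : fun2) : fun2 :=
  fun x t => g x t - h x t / (1 + pinv (mul2 h h) x t) * pinv (mul2 h g) x t.

Fixpoint fit (f : nat -> fun2) (l : nat) : nat -> fun2 :=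
  match l with
  | O => f
  | S l' => fun j => dstep (fit f l' (S l')) (fit f l' j)
  end.

Fixpoint pit (f : nat -> fun2) (psi : fun2) (l : nat) : fun2 :=
  match l with
  | O => psi
  | S l' => dstep (fit f l' (S l')) (pit f psi l')
  end.

Local Close Scope R_scope.
Local Open Scope ring_scope.

(* W_1(g_1,...,g_k) = det( delta_ij + \partial^{-1}(g_i g_j) ), with the
   family given 0-based: g_{i+1} = g i *)
Definition W1 (k : nat) (g : nat -> fun2) : fun2 :=
  fun x t => \det (\matrix_(i < k, j < k)
                     ((i == j)%:R + pinv (mul2 (g i) (g j)) x t) : 'M[R]_k).

Definition W2 (k : nat) (g : nat -> fun2) : fun2 :=
  fun x t => \det (\matrix_(i < k, j < k)
                     (if (i.+1 < k)%N
                      then (i == j)%:R + pinv (mul2 (g i) (g j)) x t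
                      else g j x t) : 'M[R]_k).

(* Main.v *)
Require Import Defs.
From Stdlib Require Import Reals.
From Coquelicot Require Import Coquelicot.
From mathcomp Require Import all_boot all_algebra.
From mathcomp Require Import Rstruct.
From Stdlib Require Import Lra FunctionalExtensionality.
From mathcomp Require Import ssreflect zify.

Local Open Scope R_scope.

Definition PInt (F : R -> R) (x : R) := RInt_gen F (Rbar_locally m_infty) (at_point x).

Section PIsec.
Variable F : R -> R.
Hypothesis Fc : forall x, continuous F x.
Hypothesis Fe : forall x, ex_RInt_gen F (Rbar_locally m_infty) (at_point x).

Lemma PI_is x : is_RInt_gen F (Rbar_locally m_infty) (at_point x) (PInt F x).
Proof. unfold PInt; apply (RInt_gen_correct (V:=R_CompleteNormedModule)); auto. Qed.

Lemma PI_chasles a b : PInt F b = PInt F a + RInt F a b.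
Proof.
  have H1 : is_RInt F a b (RInt F a b).
    apply: RInt_correct; apply: ex_RInt_continuous; intros; apply Fc.
  have H2 : is_RInt_gen F (at_point a) (at_point b) (RInt F a b).
    by apply (is_RInt_gen_at_point F a b).
  pose proof (is_RInt_gen_Chasles (Fa := Rbar_locally m_infty) (Fc := at_point b) F a _ _ (PI_is a) H2) as H.
  pose proof (is_RInt_gen_unique (V := R_CompleteNormedModule) _ _ H) as E.
  exact E.
Qed.

Lemma PI_derive x : is_derive (PInt F) x (F x).
Proof.
  apply is_derive_ext with (fun y => PInt F 0 + RInt F 0 y).
    intro y; symmetry; apply PI_chasles.
  replace (F x) with (plus zero (F x)) by (rewrite plus_zero_l; reflexivity).
  apply: is_derive_plus.
    exact (is_derive_const (PInt F 0) x).
  apply (is_derive_RInt F (RInt F 0) 0 x).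
    apply filter_forall; intro y; apply: RInt_correct; apply: ex_RInt_continuous; intros; apply Fc.
  apply Fc.
Qed.

Lemma PI_cont x : continuous (PInt F) x.
Proof. apply: ex_derive_continuous; exists (F x); exact: PI_derive. Qed.

Lemma PI_lim : filterlim (PInt F) (Rbar_locally m_infty) (locally 0).
Proof.
  have H : filterlimi (fun a => is_RInt F a 0) (Rbar_locally m_infty) (locally (PInt F 0)).
    apply (filterlimi_comp _ _ _ (fun a => (a, 0)) (fun ab => is_RInt F (fst ab) (snd ab))
             _ (filter_prod (Rbar_locally m_infty) (at_point 0))).
      apply filterlim_pair.
        apply filterlim_id.
      intros P HP; rewrite /filtermap; apply: filter_forall => _; exact HP.
    exact (PI_is 0).
  apply filterlim_locally; intro eps.
  pose proof (proj1 (filterlimi_locally _ _) H eps) as H2.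
  eapply filter_imp; [| exact H2].
  intros a [z [Hz Hb]].
  have E : PInt F 0 = PInt F a + RInt F a 0 by apply PI_chasles.
  rewrite (is_RInt_unique _ _ _ _ Hz) in E.
  move: Hb; rewrite /ball /= /AbsRing_ball /abs /Hierarchy.minus /Hierarchy.plus /Hierarchy.opp /= => Hb.
  replace (PInt F a + - 0) with (-(z + - PInt F 0)) by lra.
  by rewrite Rabs_Ropp.
Qed.

Lemma PI_ge0 x : (forall y, 0 <= F y) -> 0 <= PInt F x.
Proof.
  intro Hp.
  have Q1 : filter_prod (Rbar_locally m_infty) (at_point x) (fun ab : R * R => fst ab <= snd ab).
    apply (Filter_prod _ _ _ (fun a => a < x) (fun b => b = x)).
        by exists x.
      reflexivity.
    intros a b Ha Hb; simpl; lra.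
  have Q2 : filter_prod (Rbar_locally m_infty) (at_point x)
     (fun ab : R * R => forall y, fst ab <= y <= snd ab -> norm (F y) <= F y).
    apply (Filter_prod _ _ _ (fun a => True) (fun b => True)).
        by exists 0.
      by [].
    intros a b _ _ y _.
    rewrite /norm /= /abs /= Rabs_pos_eq; [lra | apply Hp].
  pose proof (RInt_gen_norm (V := R_CompleteNormedModule) (Fa := Rbar_locally m_infty) (Fb := at_point x) F F (PInt F x) (PInt F x) Q1 Q2 (PI_is x) (PI_is x)) as H.
  move: H; rewrite /norm /= /abs /=.
  have := Rabs_pos (PInt F x); lra.
Qed.
End PIsec.


Lemma cmul (f g : R -> R) (x : R) : continuous f x -> continuous g x -> continuous (fun y => f y * g y) x.
Proof. exact (continuous_mult f g x). Qed.
Lemma cminus (f g : R -> R) (x : R) : continuous f x -> continuous g x -> continuous (fun y => f y - g y) x.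
Proof. exact (continuous_minus f g x). Qed.
Lemma cinv (f : R -> R) (x : R) : continuous f x -> f x <> 0 -> continuous (fun y => / f y) x.
Proof.
  move=> Hc Hn. apply continuity_pt_filterlim.
  apply (continuity_pt_inv f x); last exact Hn.
  by apply continuity_pt_filterlim.
Qed.
Lemma cdiv (f g : R -> R) (x : R) : continuous f x -> continuous g x -> g x <> 0 -> continuous (fun y => f y / g y) x.
Proof. move=> ? ? ?; apply: cmul => //; by apply: cinv. Qed.

Definition ExG (F : R -> R) := forall x, ex_RInt_gen F (Rbar_locally m_infty) (at_point x).

Lemma D_pos (h : R -> R) (x : R) : (forall y, continuous h y) -> ExG (fun z => h z * h z) ->
  1 <= 1 + PInt (fun z => h z * h z) x.
Proof.
  move=> hc E.
  have : 0 <= PInt (fun z => h z * h z) x.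
    apply PI_ge0 => //.
    move=> y; apply Rle_0_sqr.
  lra.
Qed.

Lemma dstep_cont (h g : R -> R) :
  (forall y, continuous h y) -> (forall y, continuous g y) ->
  ExG (fun z => h z * h z) -> ExG (fun z => h z * g z) ->
  forall y, continuous (fun y => g y - h y / (1 + PInt (fun z => h z * h z) y)
                                    * PInt (fun z => h z * g z) y) y.
Proof.
  move=> hc gc Ehh Ehg y.
  apply: cminus => //.
  apply: cmul; last first.
    apply: PI_cont => // z; exact: cmul.
  apply: cdiv => //.
    apply: (continuous_plus (fun _ => 1) (PInt (fun z => h z * h z))).
      apply continuous_const.
    apply: PI_cont => // z; exact: cmul.
  have := D_pos h y hc Ehh; lra.
Qed.

Section Key.
Variables h a b : R -> R.
Hypotheses (hc : forall y, continuous h y) (ac : forall y, continuous a y)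
           (bc : forall y, continuous b y).
Hypotheses (Ehh : ExG (fun z => h z * h z)) (Eha : ExG (fun z => h z * a z))
           (Ehb : ExG (fun z => h z * b z)) (Eab : ExG (fun z => a z * b z)).

Let Phh := PInt (fun z => h z * h z).
Let Pha := PInt (fun z => h z * a z).
Let Phb := PInt (fun z => h z * b z).
Let Pab := PInt (fun z => a z * b z).
Let D y := 1 + Phh y.
Let sa y := a y - h y / D y * Pha y.
Let sb y := b y - h y / D y * Phb y.
Let Fn y := Pab y - Pha y * Phb y / D y.

Lemma Dnz y : D y <> 0.
Proof. have := D_pos h y hc Ehh. rewrite /D /Phh. lra. Qed.

Lemma dPhh y : is_derive Phh y (h y * h y).
Proof. apply: PI_derive => // z; exact: cmul. Qed.
Lemma dPha y : is_derive Pha y (h y * a y).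
Proof. apply: PI_derive => // z; exact: cmul. Qed.
Lemma dPhb y : is_derive Phb y (h y * b y).
Proof. apply: PI_derive => // z; exact: cmul. Qed.
Lemma dPab y : is_derive Pab y (a y * b y).
Proof. apply: PI_derive => // z; exact: cmul. Qed.

Lemma dD y : is_derive D y (h y * h y).
Proof.
  have H := is_derive_plus (fun _ => 1) Phh y _ _ (is_derive_const 1 y) (dPhh y).
  replace (h y * h y) with (plus zero (h y * h y)) by (rewrite plus_zero_l; reflexivity).
  exact H.
Qed.

Lemma dFn y : is_derive Fn y (sa y * sb y).
Proof.
  have H1 := is_derive_mult Pha Phb y _ _ (dPha y) (dPhb y) Rmult_comm.
  have H2 := is_derive_div (fun y => Pha y * Phb y) D y _ _ H1 (dD y) (Dnz y).
  have H3 := is_derive_minus Pab (fun y => Pha y * Phb y / D y) y _ _ (dPab y) H2.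
  match type of H3 with is_derive _ _ ?v => replace (sa y * sb y) with v end.
    exact H3.
  have := Dnz y.
  rewrite /sa /sb /Hierarchy.minus /Hierarchy.plus /Hierarchy.opp /Hierarchy.mult /=.
  move=> Dn. field. exact Dn.
Qed.
Lemma Fn_lim : filterlim Fn (Rbar_locally m_infty) (locally 0).
Proof.
  have PL : forall G : R -> R, (forall y, continuous G y) -> ExG G ->
       is_lim (PInt G) m_infty 0.
    move=> G Gc GE. exact (PI_lim G Gc GE).
  have cm : forall u v : R -> R, (forall y, continuous u y) -> (forall y, continuous v y) ->
       forall y, continuous (fun z => u z * v z) y.
    move=> u v uc vc y; exact: cmul.
  pose proof (PL _ (cm _ _ hc ac) Eha) as LA.
  pose proof (PL _ (cm _ _ hc bc) Ehb) as LB.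
  pose proof (PL _ (cm _ _ ac bc) Eab) as LAB.
  pose proof (PL _ (cm _ _ hc hc) Ehh) as LHH.
  pose proof (is_lim_plus' (fun _ => 1) _ m_infty 1 0 (is_lim_const 1 m_infty) LHH) as LD.
  pose proof (is_lim_mult _ _ m_infty 0 0 LA LB I) as LM.
  simpl in LM.
  have n1 : Coquelicot.Rbar.Finite (1 + 0) <> Coquelicot.Rbar.Finite 0.
    move=> E; injection E; lra.
  pose proof (is_lim_div _ _ m_infty _ _ LM LD n1 I) as LQ.
  simpl in LQ.
  pose proof (is_lim_minus' _ _ m_infty _ _ LAB LQ) as LF.
  have E : (0 - 0 * 0 * / (1 + 0)) = 0 by field.
  rewrite E in LF.
  exact LF.
Qed.

Lemma key x : PInt (fun y => sa y * sb y) x = Pab x - Pha x * Phb x / D x.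
Proof.
  have dE : forall y, Derive Fn y = sa y * sb y.
    move=> y; exact (is_derive_unique _ _ _ (dFn y)).
  have sac : forall y, continuous sa y.
    move=> y; exact: (dstep_cont h a hc ac Ehh Eha y).
  have sbc : forall y, continuous sb y.
    move=> y; exact: (dstep_cont h b hc bc Ehh Ehb y).
  have A1 : filter_prod (Rbar_locally m_infty) (at_point x)
     (fun ab : R * R => forall y, Rmin (fst ab) (snd ab) <= y <= Rmax (fst ab) (snd ab) -> ex_derive Fn y).
    apply (Filter_prod _ _ _ (fun a => True) (fun b => True)).
        by exists 0.
      by [].
    move=> a' b' _ _ y _; exists (sa y * sb y); exact (dFn y).
  have A2 : filter_prod (Rbar_locally m_infty) (at_point x)
     (fun ab : R * R => forall y, Rmin (fst ab) (snd ab) <= y <= Rmax (fst ab) (snd ab) -> continuous (Derive Fn) y).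
    apply (Filter_prod _ _ _ (fun a => True) (fun b => True)).
        by exists 0.
      by [].
    move=> a' b' _ _ y _.
    apply: (continuous_ext (fun y => sa y * sb y)).
      move=> z; by rewrite dE.
    exact: cmul.
  have A3 : filterlim Fn (at_point x) (locally (Fn x)).
    move=> P HP; exact (locally_singleton _ _ HP).
  pose proof (is_RInt_gen_Derive (Fa := Rbar_locally m_infty) (Fb := at_point x) Fn 0 (Fn x) A1 A2 Fn_lim A3) as H.
  have A4 : filter_prod (Rbar_locally m_infty) (at_point x)
     (fun ab : R * R => forall y, Rmin (fst ab) (snd ab) < y < Rmax (fst ab) (snd ab) -> Derive Fn y = sa y * sb y).
    apply (Filter_prod _ _ _ (fun a => True) (fun b => True)).
        by exists 0.
      by [].
    move=> a' b' _ _ y _; exact: dE.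
  pose proof (is_RInt_gen_ext (V := R_NormedModule) (Fa := Rbar_locally m_infty) (Fb := at_point x) _ (fun y => sa y * sb y) _ A4 H) as H'.
  pose proof (is_RInt_gen_unique (V := R_CompleteNormedModule) _ _ H') as E.
  rewrite /PInt E /Fn. exact (Rminus_0_r _).
Qed.
End Key.

From mathcomp Require Import ring.
Import GRing.Theory.
Section SchurS.
Local Open Scope ring_scope.

Lemma schur {F : fieldType} {k : nat} (A : 'M[F]_(1 + k)) :
  A 0 0 != 0 ->
  \det A = A 0 0 * \det (\matrix_(i < k, j < k)
     (A (rshift 1 i) (rshift 1 j) - A (rshift 1 i) 0 * A 0 (rshift 1 j) / A 0 0)).
Proof.
move=> d0.
set d := A 0 0.
set S := \matrix_(i < k, j < k) _.
pose L : 'M[F]_(1 + k) := block_mx 1 0 (d^-1 *: dlsubmx A) 1.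
pose U : 'M[F]_(1 + k) := block_mx (d%:M) (ursubmx A) 0 S.
have -> : A = L *m U.
  rewrite /L /U mulmx_block !mul1mx !mul0mx ?addr0 ?add0r.
  rewrite -[LHS]submxK; congr block_mx.
  - apply/matrixP=> i j; rewrite !ord1 !mxE /d /=.
    by rewrite mulr1n; congr (A _ _); apply/val_inj.
  - by rewrite -scalemxAl mul_mx_scalar scalerA mulVf // scale1r.
  - apply/matrixP=> i j; rewrite /S !mxE big_ord1 !mxE.
    have -> : lshift k (0 : 'I_1) = 0 by apply/val_inj.
    rewrite /d; field; exact: d0.
rewrite det_mulmx det_lblock det_ublock !det1 mul1r det_scalar1.
by rewrite mul1r.
Qed.

End SchurS.

Local Open Scope R_scope.


Definition contx (G : fun2) (t : R) := forall y, continuous (fun z => G z t) y.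

Lemma key2 (H A B : fun2) (t x : R) :
  contx H t -> contx A t -> contx B t ->
  ex_pinv (mul2 H H) -> ex_pinv (mul2 H A) -> ex_pinv (mul2 H B) -> ex_pinv (mul2 A B) ->
  pinv (mul2 (dstep H A) (dstep H B)) x t
   = pinv (mul2 A B) x t - pinv (mul2 A H) x t * pinv (mul2 H B) x t / (1 + pinv (mul2 H H) x t).
Proof.
  move=> hc ac bc Ehh Eha Ehb Eab.
  have -> : mul2 A H = mul2 H A.
    apply functional_extensionality => y; apply functional_extensionality => s.
    rewrite /mul2; exact: Rmult_comm.
  exact (key (fun z => H z t) (fun z => A z t) (fun z => B z t) hc ac bc
           (fun x => Ehh x t) (fun x => Eha x t) (fun x => Ehb x t) (fun x => Eab x t) x).
Qed.

Lemma W1_step (k : nat) (G G' : nat -> fun2) (x t : R) :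
  (forall j, (j < k)%N -> G' j = dstep (G 0%N) (G j.+1)) ->
  (forall j, (j <= k)%N -> contx (G j) t) ->
  (forall i j, (i <= k)%N -> (j <= k)%N -> ex_pinv (mul2 (G i) (G j))) ->
  W1 k G' x t = W1 k.+1 G x t / (1 + pinv (mul2 (G 0%N) (G 0%N)) x t).
Proof.
  move=> HG Hc He.
  have D1 : 1 <= 1 + pinv (mul2 (G 0%N) (G 0%N)) x t.
    exact (D_pos (fun z => G 0%N z t) x (Hc 0%N isT) (fun x => He 0%N 0%N isT isT x t)).
  have Dn : (1 + pinv (mul2 (G 0%N) (G 0%N)) x t) <> 0 by lra.
  rewrite /W1 (schur (F := R)); last by rewrite !mxE /=; apply/eqP.
  rewrite !mxE /= RdivE [X in (X / _)%R]mulrC mulfK; last by apply/eqP.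
  congr (determinant _); apply/matrixP => i j; rewrite !mxE.
  have Hr : forall (q : 'I_k), nat_of_ord (rshift 1 q) = q.+1 by [].
  have H0 : forall (q : 'I_k), (rshift 1 q == 0%R :> 'I_k.+1) = false.
    move=> q; apply/negbTE; apply/eqP => /(congr1 val) /=; by rewrite add1n.
  have H1 : forall (p q : 'I_k), (rshift 1 p == rshift 1 q :> 'I_k.+1) = (p == q).
    move=> p q; by rewrite -val_eqE /= eqn_add2l.
  rewrite H1 (H0 i) (eq_sym _ (rshift 1 j)) (H0 j) !Hr /=.
  rewrite (HG i (ltn_ord i)) (HG j (ltn_ord j)).
  rewrite key2.
  - by rewrite !add0r !(RminusE, RmultE, RdivE, RplusE) addrA.
  - exact: Hc.
  - exact: (Hc _ (ltn_ord i)).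
  - exact: (Hc _ (ltn_ord j)).
  - exact: He.
  - exact: (He _ _ _ (ltn_ord i)).
  - exact: (He _ _ _ (ltn_ord j)).
  - exact: (He _ _ (ltn_ord i) (ltn_ord j)).
Qed.

Lemma W2_step (k : nat) (G G' : nat -> fun2) (x t : R) :
  (forall j, (j <= k)%N -> G' j = dstep (G 0%N) (G j.+1)) ->
  (forall j, (j <= k.+1)%N -> contx (G j) t) ->
  (forall i j, (i <= k)%N -> (j <= k.+1)%N -> ex_pinv (mul2 (G i) (G j))) ->
  W2 k.+1 G' x t = W2 k.+2 G x t / (1 + pinv (mul2 (G 0%N) (G 0%N)) x t).
Proof.
  move=> HG Hc He.
  have D1 : 1 <= 1 + pinv (mul2 (G 0%N) (G 0%N)) x t.
    exact (D_pos (fun z => G 0%N z t) x (Hc 0%N isT) (fun x => He 0%N 0%N isT isT x t)).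
  have Dn : (1 + pinv (mul2 (G 0%N) (G 0%N)) x t) <> 0 by lra.
  rewrite /W2 (schur (F := R) (k := k.+1)); last by rewrite !mxE /=; apply/eqP.
  rewrite !mxE /= RdivE [X in (X / _)%R]mulrC mulfK; last by apply/eqP.
  congr (determinant _); apply/matrixP => i j; rewrite !mxE.
  have Hr : forall (q : 'I_k.+1), nat_of_ord (rshift 1 q) = q.+1 by [].
  have H0 : forall (q : 'I_k.+1), (rshift 1 q == 0%R :> 'I_k.+2) = false.
    move=> q; apply/negbTE; apply/eqP => /(congr1 val) /=; by rewrite add1n.
  have H1 : forall (p q : 'I_k.+1), (rshift 1 p == rshift 1 q :> 'I_k.+2) = (p == q).
    move=> p q; by rewrite -val_eqE /= eqn_add2l.
  rewrite H1 (H0 i) (eq_sym _ (rshift 1 j)) (H0 j) !Hr /=.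
  rewrite !ltnS.
  have Hj : (j <= k)%N by rewrite -ltnS.
  rewrite (HG j Hj).
  case Hik : (i < k)%N.
  - rewrite (HG i (ltnW Hik)) key2.
    + by rewrite !add0r !(RminusE, RmultE, RdivE, RplusE) addrA.
    + exact: Hc.
    + exact: (Hc i.+1 (ltnW Hik)).
    + exact: (Hc j.+1 (ltn_ord j)).
    + exact: He.
    + exact: (He 0%N i.+1 isT (ltnW Hik)).
    + exact: (He 0%N j.+1 isT (ltn_ord j)).
    + exact: (He i.+1 j.+1 Hik (ltn_ord j)).
  - rewrite /dstep !add0r !(RminusE, RmultE, RdivE, RplusE).
    ring.
Qed.

Lemma dstep_contx (H A : fun2) (t : R) : contx H t -> contx A t ->
  ex_pinv (mul2 H H) -> ex_pinv (mul2 H A) -> contx (dstep H A) t.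
Proof.
  move=> hc ac E1 E2 y.
  exact (dstep_cont (fun z => H z t) (fun z => A z t) hc ac (fun x => E1 x t) (fun x => E2 x t) y).
Qed.

Lemma smooth_contx (F : fun2) t : smooth2 F -> contx F t.
Proof.
  move=> Hs y. apply: ex_derive_continuous. exact: (proj1 (Hs nil y t)).
Qed.

Lemma fit_cont (m : nat) (f : nat -> fun2) (psi : fun2) (t : R) :
  (forall j, (1 <= j <= m)%nat -> smooth2 (f j)) -> smooth2 psi ->
  (forall l i j, (l < m)%nat -> (1 <= i <= m)%nat -> (1 <= j <= m)%nat ->
              ex_pinv (mul2 (fit f l i) (fit f l j))) ->
  (forall l i, (l < m)%nat -> (1 <= i <= m)%nat ->
              ex_pinv (mul2 (fit f l i) (pit f psi l))) ->
  forall l, (l < m)%nat ->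
    (forall i, (1 <= i <= m)%nat -> contx (fit f l i) t) /\ contx (pit f psi l) t.
Proof.
  move=> Hsf Hsp Hff Hfp; elim=> [|l IH] Hl.
    split; [move=> i Hi; exact: smooth_contx (Hsf i Hi) | exact: smooth_contx].
  have Hl' : (l < m)%nat by lia.
  have [IH1 IH2] := IH Hl'.
  have Hb : (1 <= l.+1 <= m)%nat by lia.
  split.
    move=> i Hi /=; apply: dstep_contx; [exact: IH1 | exact: IH1 | exact: Hff | exact: Hff].
  rewrite /=; apply: dstep_contx; [exact: IH1 | exact: IH2 | exact: Hff | exact: Hfp].
Qed.

Theorem lemma5p1
  (n N m : nat) (alpha lambda : R) (lam : nat -> R)
  (u : fun2) (phi : nat -> fun2) (f : nat -> fun2) (psi : fun2)
  (* the constants lambda_1, ..., lambda_{N+m} are distinct *)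
  (Hlam : forall i j : nat, (1 <= i <= N + m)%nat -> (1 <= j <= N + m)%nat ->
            i <> j -> lam i <> lam j)
  (* standing assumption: all functions of (x,t) are smooth *)
  (Hsm_u : smooth2 u)
  (Hsm_phi : forall j, (1 <= j <= N)%nat -> smooth2 (phi j))
  (Hsm_f : forall j, (1 <= j <= m)%nat -> smooth2 (f j))
  (Hsm_psi : smooth2 psi)
  (Hsm_b : forall k, (k <= n + 2)%nat -> smooth2 (bkdv u k))
  (* standing assumption: the integrals \partial^{-1}(.) appearing converge *)
  (Hcv_b : forall k, (1 <= k <= n + 1)%nat -> ex_pinv (mul2 (dx u) (bkdv u k)))
  (Hcv_phif : forall i j, (1 <= i <= N)%nat -> (1 <= j <= m)%nat ->
                ex_pinv (mul2 (phi i) (f j)))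
  (Hcv_phipsi : forall i, (1 <= i <= N)%nat -> ex_pinv (mul2 (phi i) psi))
  (Hcv_ff : forall l i j, (l < m)%nat -> (1 <= i <= m)%nat -> (1 <= j <= m)%nat ->
              ex_pinv (mul2 (fit f l i) (fit f l j)))
  (Hcv_fpsi : forall l i, (l < m)%nat -> (1 <= i <= m)%nat ->
              ex_pinv (mul2 (fit f l i) (pit f psi l)))
  (* the n-th KdV equation with self-consistent sources of degree N *)
  (Hkdv : forall x t, dt u x t =
            dx (fun y s => -2 * bkdv u (n + 2) y s
                           - 2 * alpha * sumR 1 N (fun j => (phi j y s) ^ 2)) x t)
  (Hphi : forall j, (1 <= j <= N)%nat -> forall x t,
            dx (dx (phi j)) x t + (lam j + u x t) * phi j x t = 0)
  (* f_j satisfies the Lax pair with spectral parameter lambda_{N+j},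
     eta = -alpha/2 *)
  (Hf_x : forall j, (1 <= j <= m)%nat -> forall x t,
            dx (dx (f j)) x t + (lam (N + j)%nat + u x t) * f j x t = 0)
  (Hf_t : forall j, (1 <= j <= m)%nat -> forall x t,
            dt (f j) x t = Qop n N u phi alpha (- / 2 * alpha) (lam (N + j)%nat) (f j) x t)
  (* psi satisfies the Lax pair with spectral parameter lambda *)
  (Hpsi_x : forall x t, dx (dx psi) x t + (lambda + u x t) * psi x t = 0)
  (Hpsi_t : forall x t, dt psi x t = Qop n N u phi alpha (- / 2 * alpha) lambda psi x t) :
  forall (l k : nat), (1 <= l <= m - 1)%nat -> (1 <= k <= m - l)%nat ->
  forall x t : R,
    W1 k (fun i => fit f l (l + 1 + i)) x t
      = W1 (k + 1) (fun i => fit f (l - 1) (l + i)) x t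
        / (1 + pinv (mul2 (fit f (l - 1) l) (fit f (l - 1) l)) x t)
    /\
    W2 (k + 1) (fun i => if (i < k)%N then fit f l (l + 1 + i) else pit f psi l) x t
      = W2 (k + 2) (fun i => if (i < k + 1)%N then fit f (l - 1) (l + i)
                            else pit f psi (l - 1)) x t
        / (1 + pinv (mul2 (fit f (l - 1) l) (fit f (l - 1) l)) x t).
Proof.
  move=> l k Hl Hk x t.
  case: l Hl Hk => [|l'] Hl Hk; first by lia.
  have Hlm : (l' < m)%nat by lia.
  have [FC PC] := fit_cont m f psi t Hsm_f Hsm_psi Hcv_ff Hcv_fpsi l' Hlm.
  have -> : (l'.+1 - 1)%nat = l' by lia.
  split.
  - have -> : (k + 1)%nat = k.+1 by lia.
    rewrite (W1_step k (fun i => fit f l' (l'.+1 + i)) (fun i => fit f l'.+1 (l'.+1 + 1 + i)) x t).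
    + by rewrite /= addn0.
    + move=> j Hj /=. by rewrite addn0 -addnA add1n.
    + move=> j Hj; apply: FC; lia.
    + move=> i j Hi Hj; apply: Hcv_ff => //; lia.
  - have -> : (k + 2)%nat = k.+2 by lia.
    have -> : (k + 1)%nat = k.+1 by lia.
    rewrite (W2_step k (fun i => if (i < k.+1)%N then fit f l' (l'.+1 + i) else pit f psi l')
         (fun i => if (i < k)%N then fit f l'.+1 (l'.+1 + 1 + i) else pit f psi l'.+1) x t).
    + by rewrite /= addn0.
    + move=> j Hj /=. rewrite ltnS. case: ifP => Hjk.
        by rewrite addn0 -addnA add1n.
      by rewrite addn0.
    + move=> j Hj /=. case: ifP => Hjk.
        apply: FC; lia.
      exact: PC.
    + move=> i j Hi Hj /=. have -> : (i < k.+1)%N by lia.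
      case: ifP => Hjk.
        apply: Hcv_ff => //; lia.
      apply: Hcv_fpsi => //; lia.
Qed.
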